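(* In the setting of the context, let $a,b\in X$ and $c\in C$ be such that some geodesic from $a$ to $b$ does not intersect $B_{R+2\delta}(c)$. Then $d_c(a,b)\le 4\delta$.
   Context: $X$ is a $\delta$-hyperbolic geodesic metric space ($\delta>0$, every geodesic triangle $\delta$-thin). $G$ acts on $X$ by isometries and $\mathcal{C}=(C,\{G_c\})$ is a $\rho$-separated fairly rotating family with $\rho\ge20\delta$ (i.e. $C\subseteq X$ is $G$-invariant, $G_c$ fixes $c$, $G_{gc}=gG_cg^{-1}$, distinct points of $C$ are at distance $\ge\rho$, and for $c\in C$, $g\in G_c\setminus\{1\}$, $x\in C\setminus\{c\}$ some geodesic from $x$ to $gx$ meets the closed $1$-ball about $c$). Fix $2+2\delta\le R\le\frac\rho2-3\delta$; $B_r(p)$ denotes the open ball. For $p\in C$, $S_p=\{x:d(x,p)=R\}$ with metric $d_{S_p}(x,y)=$ infimum of lengths of paths from $x$ to $y$ in $X\setminus B_R(p)$ (possibly $\infty$). For $x$ with $d(x,p)\ge R$, $\pi_p(x)\subseteq S_p$ is the set of points where geodesics $[p,x]$ meet $S_p$ (equivalently nearest-point projections of $x$ to $S_p$), and $d_p(x,y)=\operatorname{diam}_{S_p}(\pi_p(x)\cup\pi_p(y))$. *)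

(* Defs.v *)
From mathcomp Require Import all_boot all_order all_algebra.
From mathcomp Require Import all_classical all_reals ereal.
Set Implicit Arguments. Unset Strict Implicit. Unset Printing Implicit Defensive.
Import Order.TTheory GRing.Theory Num.Theory.
Local Open Scope classical_set_scope.
Local Open Scope ring_scope.

Section Defs.
Variables (R : realType) (X : Type) (d : X -> X -> R).

Definition is_metric : Prop :=
  [/\ forall x y, d x y = 0 <-> x = y,
      forall x y, d x y = d y x &
      forall x y z, d x z <= d x y + d y z].

Definition geodesic (x y : X) (gam : R -> X) : Prop :=
  [/\ gam 0 = x, gam (d x y) = y &
      forall s t, 0 <= s <= d x y -> 0 <= t <= d x y ->
        d (gam s) (gam t) = `|s - t| ].

Definition geod_image (x y : X) (gam : R -> X) : set X :=
  [set gam t | t in [set t : R | 0 <= t <= d x y]].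

Definition geodesic_space : Prop :=
  forall x y, exists gam, geodesic x y gam.

Definition delta_hyperbolic (delta : R) : Prop :=
  forall x y z g1 g2 g3, geodesic x y g1 -> geodesic y z g2 -> geodesic z x g3 ->
    forall p, geod_image x y g1 p ->
      exists2 q, (geod_image y z g2 `|` geod_image z x g3) q & d p q <= delta.

Definition path_from (x y : X) (f : R -> X) : Prop :=
  [/\ f 0 = x, f 1 = y &
      forall t, 0 <= t <= 1 -> forall eps, 0 < eps -> exists2 eta, 0 < eta &
        forall s, 0 <= s <= 1 -> `|s - t| < eta -> d (f s) (f t) < eps].

Definition path_length (f : R -> X) : \bar R :=
  ereal_sup [set v | exists n (t : nat -> R),
     [/\ t 0%N = 0, t n = 1, (forall i, (i < n)%N -> t i <= t i.+1) &
        v = ((\sum_(i < n) d (f (t i)) (f (t i.+1)))%:E)]].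

Definition ball_open (p : X) (r : R) : set X := [set x | d p x < r].

Definition sphere (p : X) (r : R) : set X := [set x | d x p = r].

(** d_{S_p}: infimum of lengths of paths in X \ B_r(p) (possibly +oo) *)
Definition dS (p : X) (r : R) (x y : X) : \bar R :=
  ereal_inf [set path_length f | f in
    [set f | path_from x y f /\ forall t, 0 <= t <= 1 -> ~ ball_open p r (f t)]].

Definition diamS (p : X) (r : R) (A : set X) : \bar R :=
  ereal_sup [set v | exists x y, [/\ A x, A y & v = dS p r x y]].

(** pi_p(x): points where geodesics [p,x] meet S_p (a geodesic from p
    to x is at distance t from p at time t, so it meets S_p at time r) *)
Definition proj (p : X) (r : R) (x : X) : set X :=
  [set z | exists2 gam, geodesic p x gam & z = gam r].

Definition dproj (p : X) (r : R) (x y : X) : \bar R :=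
  diamS p r (proj p r x `|` proj p r y).

End Defs.

Definition group_action_isom (R : realType) (X G : Type) (d : X -> X -> R)
  (mul : G -> G -> G) (inv : G -> G) (one : G) (act : G -> X -> X) : Prop :=
  (forall g h k, mul g (mul h k) = mul (mul g h) k) /\
  (forall g, mul one g = g /\ mul g one = g) /\
  (forall g, mul (inv g) g = one /\ mul g (inv g) = one) /\
  (forall x, act one x = x) /\
  (forall g h x, act (mul g h) x = act g (act h x)) /\
  (forall g x y, d (act g x) (act g y) = d x y).

Definition fairly_rotating_family (R : realType) (X G : Type) (d : X -> X -> R)
  (mul : G -> G -> G) (inv : G -> G) (one : G) (act : G -> X -> X)
  (C : set X) (Gc : X -> set G) (rho : R) : Prop :=
  (forall g c, C c -> C (act g c)) /\
  (forall c, C c -> Gc c one /\ (forall g h, Gc c g -> Gc c h -> Gc c (mul g h))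
                     /\ (forall g, Gc c g -> Gc c (inv g))) /\
  (forall c g, C c -> Gc c g -> act g c = c) /\
  (forall c g, C c -> Gc (act g c) = [set mul (mul g h) (inv g) | h in Gc c]) /\
  (forall c c', C c -> C c' -> c <> c' -> rho <= d c c') /\
  (forall c g x, C c -> Gc c g -> g <> one -> C x -> x <> c ->
     exists2 gam, geodesic d x (act g x) gam &
       exists2 t, 0 <= t <= d x (act g x) & d (gam t) c <= 1).

(* Main.v *)
From mathcomp Require Import all_boot all_order all_algebra.
From mathcomp Require Import all_classical all_reals ereal.
From mathcomp Require Import topology normedtype derive.
From mathcomp Require Import lra.
Require Import Defs.
Import Order.TTheory GRing.Theory Num.Theory.
Import numFieldNormedType.Exports.
Local Open Scope classical_set_scope.
Local Open Scope ring_scope.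
Set Implicit Arguments. Unset Strict Implicit.


Definition lipI (R : realType) (X : Type) (d : X -> X -> R) (F : R -> X) (A : R) :=
  forall s t, 0 <= s <= A -> 0 <= t <= A -> d (F s) (F t) <= `|s - t|.

Definition catp (R : realType) (X : Type) (F1 : R -> X) (A : R) (F2 : R -> X) :=
  fun s => if s <= A then F1 s else F2 (s - A).

Lemma catp_lip (R : realType) (X : Type) (d : X -> X -> R) F1 A F2 B :
  is_metric d -> 0 <= A -> 0 <= B -> lipI d F1 A -> lipI d F2 B -> F1 A = F2 0 ->
  lipI d (catp F1 A F2) (A + B).
Proof.
move=> [_ dsym dtri] A0 B0 L1 L2 E s t.
wlog st : s t / s <= t.
  move=> H hs ht; case: (leP s t) => [st|/ltW ts]; first exact: H.
  by rewrite dsym distrC; apply: H.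
move=> /andP[s0 sA] /andP[t0 tA]; rewrite /catp.
case: (leP s A) => sa; case: (leP t A) => ta.
- by apply: L1; rewrite ?s0 ?t0.
- apply: (le_trans (dtri _ (F1 A) _)).
  rewrite (ler0_norm (x := s - t)); last lra.
  apply: (@le_trans _ _ (`|s - A| + `|0 - (t - A)|)).
    apply: lerD; [apply: L1|rewrite E; apply: L2]; apply/andP; split; lra.
  rewrite ler0_norm; last lra. rewrite ler0_norm; last lra. lra.
- lra.
- rewrite (_ : s - t = (s - A) - (t - A)); last by lra.
  by apply: L2; apply/andP; split; lra.
Qed.



Lemma mono_le (R : realType) (t : nat -> R) n :
  (forall i, (i < n)%N -> t i <= t i.+1) ->
  forall i j, (i <= j)%N -> (j <= n)%N -> t i <= t j.
Proof.
move=> M i; elim=> [|j IH] ij jn.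
  by rewrite leqn0 in ij; rewrite (eqP ij).
case: (ltngtP i j.+1) ij => // [/[swap] _ ij|-> _] ; last by [].
apply: le_trans (IH _ _) (M _ jn) => //.
by apply: ltnW.
Qed.

Lemma sum_part (R : realType) (X : Type) (d : X -> X -> R) (f : R -> X) K (t : nat -> R) n :
  (forall s u, 0 <= s <= 1 -> 0 <= u <= 1 -> d (f s) (f u) <= K * `|s - u|) ->
  t 0%N = 0 -> t n = 1 -> (forall i, (i < n)%N -> t i <= t i.+1) ->
  \sum_(i < n) d (f (t i)) (f (t i.+1)) <= K.
Proof.
move=> L t0 tn M.
have inI : forall i, (i <= n)%N -> 0 <= t i <= 1.
  move=> i ilen; apply/andP; split.
    by rewrite -t0; apply: (mono_le M).
  by rewrite -tn; apply: (mono_le M).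
suff H : forall m, (m <= n)%N -> \sum_(i < m) d (f (t i)) (f (t i.+1)) <= K * (t m - t 0%N).
  by have := H n (leqnn n); rewrite tn t0 subr0 mulr1.
elim=> [|m IH] mn.
  by rewrite big_ord0 subrr mulr0.
rewrite big_ord_recr /=.
have -> : K * (t m.+1 - t 0%N) = K * (t m - t 0%N) + K * `|t m - t m.+1|.
  rewrite distrC ger0_norm; last by rewrite subr_ge0; apply: M.
  by rewrite -mulrDr; congr (_ * _); lra.
apply: lerD; first by apply: IH; apply: ltnW.
by apply: L; apply: inI => //; apply: ltnW.
Qed.



Lemma dS_le (R : realType) (X : Type) (d : X -> X -> R) (c : X) (r : R) F T :
  is_metric d -> 0 < T -> lipI d F T ->
  (forall s, 0 <= s <= T -> r <= d c (F s)) ->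
  (dS d c r (F 0%R) (F T) <= T%:E)%E.
Proof.
move=> met T0 L av.
pose f := fun s => F (T * s).
have fI : forall s, 0 <= s <= 1 -> 0 <= T * s <= T.
  move=> s /andP[s0 s1]; apply/andP; split; first by rewrite mulr_ge0 // ltW.
  by rewrite ler_piMr // ltW.
have Lf : forall s u, 0 <= s <= 1 -> 0 <= u <= 1 -> d (f s) (f u) <= T * `|s - u|.
  move=> s u hs hu; rewrite /f; apply: le_trans (L _ _ (fI _ hs) (fI _ hu)) _.
  by rewrite -mulrBr normrM gtr0_norm.
apply: (@le_trans _ _ (path_length d f)).
  apply: ereal_inf_lbound.
  exists f => //; split.
    split; first by rewrite /f mulr0.
      by rewrite /f mulr1.
    move=> t ht eps eps0; exists (eps / T); first by rewrite divr_gt0.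
    move=> s hs st; apply: le_lt_trans (Lf _ _ hs ht) _.
    by rewrite mulrC -ltr_pdivlMr.
  move=> t ht; rewrite /ball_open /=; apply/negP; rewrite -leNgt; exact: av (fI _ ht).
apply: ge_ereal_sup => v [n [t [t0 tn M ->]]].
rewrite lee_fin; exact: (sum_part Lf t0 tn M).
Qed.



Lemma lip_cont (R : realType) (f : R -> R) :
  (forall s t, `|f s - f t| <= `|s - t|) -> continuous f.
Proof.
move=> L x; apply/cvgrPdist_lt => e e0.
near=> y.
apply: le_lt_trans (L _ _) _.
near: y.
by apply: (@cvgr_dist_lt _ _ _ _ _ id) => //; exact: cvg_id.
Unshelve. all: by end_near.
Qed.

Lemma gdist (R : realType) (X : Type) (d : X -> X -> R) x y g t :
  geodesic d x y g -> 0 <= t <= d x y -> d x (g t) = t.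
Proof.
move=> [g0 gD gi] ht; case/andP: ht => t0 t1.
rewrite -{1}g0 gi; first by rewrite sub0r normrN ger0_norm.
  by rewrite lexx /=; apply: le_trans t1.
by rewrite t0 t1.
Qed.

Lemma geo_rev (R : realType) (X : Type) (d : X -> X -> R) x y g :
  is_metric d -> geodesic d x y g -> geodesic d y x (fun t => g (d x y - t)).
Proof.
move=> [_ ds _] [g0 gD gi]; split.
- by rewrite subr0.
- by rewrite ds subrr.
- rewrite (ds y x) => s t /andP[s0 s1] /andP[t0 t1].
  rewrite gi; first by rewrite distrC; congr (`| _ |); lra.
  by apply/andP; split; lra.
  by apply/andP; split; lra.
Qed.

Lemma geo_const (R : realType) (X : Type) (d : X -> X -> R) x :
  is_metric d -> geodesic d x x (fun _ => x).
Proof.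
move=> [d0 _ _]; have dxx : d x x = 0 by apply/d0.
split => // s t; rewrite dxx => /andP[s0 s1] /andP[t0 t1].
have -> : s = 0 by lra. have -> : t = 0 by lra.
by rewrite subrr normr0.
Qed.

Lemma catp_end (R : realType) (X : Type) (F1 : R -> X) A F2 B :
  0 <= B -> F1 A = F2 0 -> catp F1 A F2 (A + B) = F2 B.
Proof.
move=> B0 E; rewrite /catp; case: leP => h.
  have -> : B = 0 by lra. by rewrite addr0.
by congr F2; lra.
Qed.

Lemma catp_0 (R : realType) (X : Type) (F1 : R -> X) A F2 :
  0 <= A -> catp F1 A F2 0 = F1 0.
Proof. by move=> A0; rewrite /catp A0. Qed.

Lemma catp_ok (R : realType) (X : Type) (P : X -> Prop) (F1 : R -> X) A F2 B :
  (forall s, 0 <= s <= A -> P (F1 s)) -> (forall s, 0 <= s <= B -> P (F2 s)) ->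
  forall s, 0 <= s <= A + B -> P (catp F1 A F2 s).
Proof.
move=> H1 H2 s /andP[s0 s1]; rewrite /catp; case: leP => h.
  by apply: H1; apply/andP; split.
by apply: H2; apply/andP; split; lra.
Qed.

Definition clamp (R : realType) (D t : R) := if t <= 0 then 0 else if t <= D then t else D.

Lemma clamp_lip (R : realType) (D : R) : 0 <= D -> forall s t, `|clamp D s - clamp D t| <= `|s - t|.
Proof.
move=> D0 s t.
wlog st : s t / s <= t.
  move=> H; case: (leP s t) => [|/ltW] h; first exact: H.
  by rewrite distrC (distrC s); apply: H.
rewrite distrC (distrC s).
suff /andP[h1 h2] : 0 <= clamp D t - clamp D s <= t - s.
  by rewrite !ger0_norm //; lra.
rewrite /clamp.
by case: (leP s 0) => h1; case: (leP t 0) => h2; case: (leP s D) => h3; case: (leP t D) => h4;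
  apply/andP; split; lra.
Qed.



Lemma d_ge0 (R : realType) (X : Type) (d : X -> X -> R) x y : is_metric d -> 0 <= d x y.
Proof.
move=> [d0 ds dt]; have := dt x y x; rewrite (ds y x).
have -> : d x x = 0 by apply/d0.
lra.
Qed.

Lemma clamp_in (R : realType) (D t : R) : 0 <= D -> 0 <= clamp D t <= D.
Proof. by move=> D0; rewrite /clamp; case: (leP t 0) => h1; [|case: (leP t D) => h2]; apply/andP; split; lra. Qed.

Lemma clamp_id (R : realType) (D t : R) : 0 <= t <= D -> clamp D t = t.
Proof. by move=> /andP[h1 h2]; rewrite /clamp; case: (leP t 0) => h3; [lra|rewrite h2]. Qed.

Lemma evt_geo (R : realType) (X : Type) (d : X -> X -> R) x1 c q g :
  is_metric d -> geodesic d c q g ->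
  exists2 t0, 0 <= t0 <= d c q & forall t, 0 <= t <= d c q -> d x1 (g t0) <= d x1 (g t).
Proof.
move=> met geo; have D0 := d_ge0 c q met.
have [_ _ gi] := geo.
have [_ ds dt] := met.
pose f := fun t => d x1 (g (clamp (d c q) t)).
have cf : continuous f.
  apply: lip_cont => s t; rewrite /f.
  apply: le_trans (clamp_lip D0 s t).
  rewrite -(gi _ _ (clamp_in _ D0) (clamp_in _ D0)).
  set a := g _; set b := g _.
  have h1 := dt x1 b a; have h2 := dt x1 a b; rewrite (ds b a) in h1.
  rewrite ler_norml; apply/andP; split; lra.
have [t0] := EVT_min D0 (continuous_subspaceT (A := `[0, d c q]) cf).
rewrite in_itv /= => ht0 H.
exists t0 => // t ht.
have := H t; rewrite in_itv /= => /(_ ht); rewrite /f !clamp_id //.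
Qed.



Lemma core (R : realType) (X : Type) (d : X -> X -> R) (delta r : R) (c p q : X) g1 g2 h :
  is_metric d -> geodesic_space d -> 0 < delta -> delta_hyperbolic d delta -> 0 <= r ->
  geodesic d c p g1 -> geodesic d c q g2 -> geodesic d p q h ->
  (forall t, 0 <= t <= d p q -> r + 2 * delta <= d c (h t)) ->
  (dS d c r (g1 r) (g2 r) <= (4 * delta)%:E)%E.
Proof.
move=> met gs dpos hyp r0 G1 G2 H hh.
have [d0 ds dt] := met.
have pq0 := d_ge0 p q met.
have D1 : r + 2 * delta <= d c p.
  have := hh 0; rewrite lexx pq0 /=; have [-> _ _] := H; by apply.
have D2 : r + 2 * delta <= d c q.
  have := hh (d p q); rewrite lexx pq0 /=; have [_ -> _] := H; by apply.
have [g10 g1D g1i] := G1; have [g20 g2D g2i] := G2.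
pose x1 := g1 (r + delta).
have approx : forall e, 0 < e < delta -> exists2 t, 0 <= t <= d c q & d x1 (g2 t) <= delta + e.
  move=> e /andP[e0 ed].
  pose u := r + delta - e.
  have hu : 0 <= u <= d c p by apply/andP; split; rewrite /u; lra.
  have [w Hw dw] := hyp c p q g1 h _ G1 H (geo_rev met G2) (g1 u) (ex_intro2 _ _ u hu erefl).
  have dcu : d c (g1 u) = u by apply: gdist G1 hu.
  have dxu : d x1 (g1 u) = e.
    rewrite /x1 g1i; last by []. by rewrite /u ger0_norm; lra.
    by apply/andP; split; lra.
  case: Hw => [[t' ht' Ew]|[t' ht' Ew]]; rewrite -Ew in dw.
    have := hh _ ht'; have := dt c (g1 u) (h t'); rewrite /u in dcu; lra.
  move: dw => /= dw.
  exists (d c q - t').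
    by rewrite (ds q c) in ht'; case/andP: ht' => ? ?; apply/andP; split; lra.
  have := dt x1 (g1 u) (g2 (d c q - t')); lra.
have [t0 ht0 tmin] := evt_geo x1 met G2.
have Ld : d x1 (g2 t0) <= delta.
  apply/ler_addgt0Pr => e e0.
  case: (ltP e delta) => ed.
    have [t ht H2] := approx e (ltac:(apply/andP; split => //)).
    exact: le_trans (tmin _ ht) H2.
  have [t ht H2] := approx (delta / 2) (ltac:(apply/andP; split; lra)).
  apply: le_trans (tmin _ ht) _; lra.
have L0 : 0 <= d x1 (g2 t0) := d_ge0 _ _ met.
have dcx1 : d c x1 = r + delta.
  rewrite /x1 (gdist G1) //; apply/andP; split; lra.
have dct0 : d c (g2 t0) = t0 by rewrite (gdist G2).
have t0lo : r <= t0 by have := dt c (g2 t0) x1; rewrite (ds (g2 t0) x1); lra.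
have t0hi : t0 <= r + 2 * delta by have := dt c x1 (g2 t0); lra.
have [k K] := gs x1 (g2 t0).
have [k0 kL ki] := K.
pose P1 := fun s => g1 (r + s).
pose P3 := fun s => g2 (t0 - s).
pose L := d x1 (g2 t0).
have LE : L = d x1 (g2 t0) by [].
pose F1 := catp P1 delta k.
pose F := catp F1 (delta + L) P3.
pose T := delta + L + (t0 - r).
have lipP1 : lipI d P1 delta.
  move=> s t /andP[? ?] /andP[? ?]; rewrite /P1 g1i; first by rewrite opprD addrACA subrr add0r.
  1,2: by apply/andP; split; lra.
have lipP3 : lipI d P3 (t0 - r).
  move=> s t /andP[? ?] /andP[? ?]; rewrite /P3 g2i; first by rewrite (_ : t0 - s - (t0 - t) = -(s - t)) ?normrN //; lra.
  1,2: by case/andP: ht0 => ? ?; apply/andP; split; lra.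
have lipk : lipI d k L.
  by move=> s t hs ht; rewrite ki.
have J1 : P1 delta = k 0 by rewrite k0.
have J2 : F1 (delta + L) = P3 0.
  by rewrite /F1 catp_end // kL /P3 subr0.
have lipF1 : lipI d F1 (delta + L).
  have dl : 0 <= delta by lra.
  exact: (catp_lip met dl L0 lipP1 lipk J1).
have lipF : lipI d F T.
  have dl : 0 <= delta + L by lra.
  have tl : 0 <= t0 - r by lra.
  exact: (catp_lip met dl tl lipF1 lipP3 J2).
have F0 : F 0 = g1 r.
  have dl : 0 <= delta + L by lra.
  have dl' : 0 <= delta by lra.
  by rewrite /F (catp_0 F1 P3 dl) /F1 (catp_0 P1 k dl') /P1 addr0.
have FT : F T = g2 r.
  have tl : 0 <= t0 - r by lra.
  rewrite /F /T (catp_end tl J2) /P3; congr g2; lra.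
have okF : forall s, 0 <= s <= T -> r <= d c (F s).
  apply: (catp_ok (P := fun x => r <= d c x)).
    apply: (catp_ok (P := fun x => r <= d c x)).
      move=> s /andP[? ?]; rewrite /P1 (gdist G1); first lra.
      by apply/andP; split; lra.
    move=> s hs; have dk := gdist K hs.
    have := dt c (k s) x1; rewrite (ds (k s) x1); case/andP: hs => ? ?; rewrite /L in Ld *; lra.
  move=> s /andP[? ?]; rewrite /P3 (gdist G2); first lra.
  by case/andP: ht0 => ? ?; apply/andP; split; lra.
have Tpos : 0 < T by rewrite /T; lra.
have := @dS_le _ _ d c r F T met Tpos lipF okF.
rewrite F0 FT => /le_trans; apply.
by rewrite lee_fin /T /L; lra.
Qed.

Unset Implicit Arguments.

Theorem lemma3p4 (R : realType) (X G : Type) (d : X -> X -> R)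
  (delta : R) (mul : G -> G -> G) (inv : G -> G) (one : G) (act : G -> X -> X)
  (C : set X) (Gc : X -> set G) (rho r : R) :
  is_metric d -> geodesic_space d -> 0 < delta -> delta_hyperbolic d delta ->
  group_action_isom d mul inv one act ->
  fairly_rotating_family d mul inv one act C Gc rho ->
  20 * delta <= rho ->
  2 + 2 * delta <= r -> r <= rho / 2 - 3 * delta ->
  forall (a b c : X), C c ->
  (exists2 gam, geodesic d a b gam &
     forall t, 0 <= t <= d a b -> ~ ball_open d c (r + 2 * delta) (gam t)) ->
  (dproj d c r a b <= (4 * delta)%:E)%E.
Proof.
move=> met gs dpos hyp _ _ _ r2 _ a b c _ [gam Gm hg].
have r0 : 0 <= r by lra.
have [_ ds _] := met.
have ab0 := d_ge0 a b met.
have hh : forall t, 0 <= t <= d a b -> r + 2 * delta <= d c (gam t).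
  move=> t ht; have := hg t ht; rewrite /ball_open /= => H.
  by rewrite leNgt; apply/negP => H'; exact: H H'.
have [gm0 gmD _] := Gm.
have hA : r + 2 * delta <= d c a.
  by rewrite -gm0; apply: hh; rewrite lexx ab0.
have hB : r + 2 * delta <= d c b.
  by rewrite -{1}gmD; apply: hh; rewrite lexx ab0.
have cA : forall t, 0 <= t <= d a a -> r + 2 * delta <= d c ((fun _ => a) t) by [].
have cB : forall t, 0 <= t <= d b b -> r + 2 * delta <= d c ((fun _ => b) t) by [].
have cR : forall t, 0 <= t <= d b a -> r + 2 * delta <= d c ((fun t => gam (d a b - t)) t).
  move=> t /andP[t0 t1]; apply: hh; rewrite (ds b a) in t1; apply/andP; split; lra.
rewrite /dproj /diamS; apply: ge_ereal_sup => v [x [y [Ax Ay ->]]].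
case: Ax => [[g1 G1 ->]|[g1 G1 ->]]; case: Ay => [[g2 G2 ->]|[g2 G2 ->]].
- exact: (core met gs dpos hyp r0 G1 G2 (geo_const a met) cA).
- exact: (core met gs dpos hyp r0 G1 G2 Gm hh).
- exact: (core met gs dpos hyp r0 G1 G2 (geo_rev met Gm) cR).
- exact: (core met gs dpos hyp r0 G1 G2 (geo_const b met) cB).
Qed.
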